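(* Let $\mathcal M$ be a local Moufang set with basis $(0,\infty)$ and little projective group $G$, and let $\tau=\mu_e$ for some unit $e$. Then $G=U_0HU_\infty\,\cup\,U_0H\tau U_0^\circ$. Consequently the stabilizer of $0$ in $G$ is $G_0=U_0H$, and the stabilizer of both $0$ and $\infty$ is $G_{0,\infty}=H$.
   Context: Group actions are right actions, written $xg$; conjugation is $g^h=h^{-1}gh$. For a set $X$ with an equivalence relation $\sim$, $\overline{x}$ denotes the class of $x$, $\overline X$ the set of classes, and $\mathrm{Sym}(X,\sim)$ the group of bijections $g$ of $X$ with $x\sim y\iff xg\sim yg$; each such $g$ induces a permutation $\overline g$ of $\overline X$, and for a subgroup $U\le \mathrm{Sym}(X,\sim)$, $\overline U$ is the induced group of permutations of $\overline X$. A local Moufang set consists of a set with equivalence relation $(X,\sim)$ with $|\overline X|>2$ and, for each $x\in X$, a subgroup (root group) $U_x\le\mathrm{Sym}(X,\sim)$ such that: (LM0) if $x\sim y$ then $\overline{U_x}=\overline{U_y}$; (LM1) $U_x$ fixes $x$ and acts sharply transitively on $X\setminus\overline x$; (LM1') $\overline{U_x}$ fixes $\overline x$ and acts sharply transitively on $\overline X\setminus\{\overline x\}$; (LM2) $U_x^g=U_{xg}$ for all $x\in X$ and all $g$ in the little projective group $G:=\langle U_x\mid x\in X\rangle$. A basis is a fixed pair $(0,\infty)$ with $0\not\sim\infty$. For $x\not\sim\infty$, $\alpha_x$ is the unique element of $U_\infty$ with $0\alpha_x=x$. A unit is $x\in X$ with $x\not\sim0$, $x\not\sim\infty$; for a unit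 $x$, $\mu_x$ is the unique element of $U_0\alpha_xU_0$ interchanging $0$ and $\infty$. The Hua subgroup is $H:=\langle\mu_x\mu_y\mid x,y\text{ units}\rangle$. $U_0^\circ:=\{u\in U_0\mid \overline u=\mathrm{id}_{\overline X}\}$. *)

(* Defs.v *)
(* Permutations of X are functions X -> X; groups act on the RIGHT:
   x g is written (g x), and the product g h (first g, then h) is the
   function composition  (fun x => h (g x)). *)
From Stdlib Require Import RelationClasses.

Set Implicit Arguments.

Definition comp {X : Type} (h g : X -> X) : X -> X := fun x => h (g x).
Definition rmul {X : Type} (g h : X -> X) : X -> X := fun x => h (g x).

Definition is_bij {X : Type} (f : X -> X) : Prop :=
  exists g : X -> X, (forall x, g (f x) = x) /\ (forall x, f (g x) = x).

Definition in_Sym {X : Type} (eqv : X -> X -> Prop) (f : X -> X) : Prop :=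
  is_bij f /\ forall x y, eqv x y <-> eqv (f x) (f y).

Definition is_subgroup_Sym {X : Type} (eqv : X -> X -> Prop)
  (P : (X -> X) -> Prop) : Prop :=
  (forall f, P f -> in_Sym eqv f) /\
  P (fun x => x) /\
  (forall f g, P f -> P g -> P (rmul f g)) /\
  (forall f g, P f -> (forall x, g (f x) = x) -> (forall x, f (g x) = x) -> P g).

Inductive gen {X : Type} (S : (X -> X) -> Prop) : (X -> X) -> Prop :=
| gen_id : gen S (fun x => x)
| gen_base f : S f -> gen S f
| gen_mul f g : gen S f -> gen S g -> gen S (rmul f g)
| gen_inv f g : gen S f -> (forall x, g (f x) = x) -> (forall x, f (g x) = x) -> gen S g.

Definition little_proj {X : Type} (U : X -> (X -> X) -> Prop) : (X -> X) -> Prop :=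
  gen (fun f => exists x, U x f).

Definition local_moufang_set {X : Type} (eqv : X -> X -> Prop)
  (U : X -> (X -> X) -> Prop) : Prop :=
  Equivalence eqv /\
  (exists a b c, ~ eqv a b /\ ~ eqv a c /\ ~ eqv b c) /\
  (forall x, is_subgroup_Sym eqv (U x)) /\
  (* LM0: x ~ y  ->  Ubar_x = Ubar_y *)
  (forall x y, eqv x y ->
     forall u, U x u -> exists v, U y v /\ forall z, eqv (u z) (v z)) /\
  (forall x u, U x u -> u x = x) /\
  (forall x y z, ~ eqv y x -> ~ eqv z x ->
     exists u, U x u /\ u y = z /\ forall u', U x u' -> u' y = z -> u' = u) /\
  (* LM1': Ubar_x fixes xbar and is sharply transitive on Xbar \ {xbar} *)
  (forall x u, U x u -> eqv (u x) x) /\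
  (forall x y z, ~ eqv y x -> ~ eqv z x -> exists u, U x u /\ eqv (u y) z) /\
  (forall x y u v, ~ eqv y x -> U x u -> U x v -> eqv (u y) (v y) ->
     forall w, eqv (u w) (v w)) /\
  (* LM2: U_x^g = U_{xg} for g in G;  v = g^-1 u g  iff  v o g = g o u *)
  (forall x g, little_proj U g ->
     forall v, U (g x) v <-> exists u, U x u /\ comp v g = comp g u).

Definition is_alpha {X : Type} (U : X -> (X -> X) -> Prop) (zero inf x : X)
  (a : X -> X) : Prop := U inf a /\ a zero = x.

Definition is_mu {X : Type} (U : X -> (X -> X) -> Prop) (zero inf x : X)
  (m : X -> X) : Prop :=
  (exists u1 a u2, U zero u1 /\ is_alpha U zero inf x a /\ U zero u2 /\
                   m = rmul (rmul u1 a) u2) /\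
  m zero = inf /\ m inf = zero.

Definition is_unit {X : Type} (eqv : X -> X -> Prop) (zero inf x : X) : Prop :=
  ~ eqv x zero /\ ~ eqv x inf.

Definition hua {X : Type} (eqv : X -> X -> Prop) (U : X -> (X -> X) -> Prop)
  (zero inf : X) : (X -> X) -> Prop :=
  gen (fun f => exists x y mx my,
         is_unit eqv zero inf x /\ is_unit eqv zero inf y /\
         is_mu U zero inf x mx /\ is_mu U zero inf y my /\ f = rmul mx my).

Definition U_circ {X : Type} (eqv : X -> X -> Prop) (U : X -> (X -> X) -> Prop)
  (zero : X) (u : X -> X) : Prop :=
  U zero u /\ forall z, eqv (u z) z.

(* Main.v *)
Require Import Defs.
From Stdlib Require Import RelationClasses FunctionalExtensionality Classical.

Theorem mainTheorem6 (X : Type) (eqv : X -> X -> Prop) (U : X -> (X -> X) -> Prop)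
  (zero inf : X) (HM : local_moufang_set eqv U) (Hbasis : ~ eqv zero inf)
  (e : X) (He : is_unit eqv zero inf e) (tau : X -> X) (Htau : is_mu U zero inf e tau) :
  (* G = U_0 H U_inf  \cup  U_0 H tau U_0^circ *)
  (forall g, little_proj U g <->
     ((exists u h v, U zero u /\ hua eqv U zero inf h /\ U inf v /\
                     g = rmul (rmul u h) v) \/
      (exists u h w, U zero u /\ hua eqv U zero inf h /\ U_circ eqv U zero w /\
                     g = rmul (rmul (rmul u h) tau) w))) /\
  (* G_0 = U_0 H *)
  (forall g, (little_proj U g /\ g zero = zero) <->
     exists u h, U zero u /\ hua eqv U zero inf h /\ g = rmul u h) /\
  (* G_{0,inf} = H *)
  (forall g, (little_proj U g /\ g zero = zero /\ g inf = inf) <->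
     hua eqv U zero inf g).
Proof.
  pose proof Htau as Htau0.
  destruct HM as [Heq [Hbig [Hsub [HLM0 [HLM1a [HLM1b [HLM1'a [HLM1'b [HLM1'c HLM2]]]]]]]]].
  destruct Heq as [Hrefl Hsym Htrans].
  unfold Reflexive, Symmetric, Transitive in *.
  assert (Hbasis' : ~ eqv inf zero) by (intro K; apply Hbasis; apply Hsym; exact K).
  assert (Uid : forall x, U x (fun y => y)) by (intro x; destruct (Hsub x) as [_ [K _]]; exact K).
  assert (Umul : forall x f g, U x f -> U x g -> U x (fun z => g (f z))).
  { intros x f g Hf Hg. destruct (Hsub x) as [_ [_ [K _]]]. exact (K f g Hf Hg). }
  assert (Usym : forall x f, U x f -> in_Sym eqv f).
  { intros x f Hf. destruct (Hsub x) as [K _]. exact (K f Hf). }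
  assert (Uinvc : forall x f g, U x f -> (forall z, g (f z) = z) -> (forall z, f (g z) = z) -> U x g).
  { intros x f g Hf H1 H2. destruct (Hsub x) as [_ [_ [_ K]]]. exact (K f g Hf H1 H2). }
  assert (Uinv : forall x f, U x f -> exists fi, U x fi /\ (forall z, fi (f z) = z) /\ (forall z, f (fi z) = z)).
  { intros x f Hf. destruct (Usym x f Hf) as [[fi [H1 H2]] _]. exists fi. split; [|split]; auto.
    exact (Uinvc x f fi Hf H1 H2). }
  assert (UG : forall x f, U x f -> little_proj U f).
  { intros x f Hf. apply gen_base. exists x. exact Hf. }
  assert (Gsym : forall g, little_proj U g -> in_Sym eqv g).
  { intros g Hg. unfold little_proj in Hg.
    induction Hg as [ | f0 Hf0 | f0 g0 Hf0 IHf Hg0 IHg | f0 g0 Hf0 IHf Hgf Hfg ].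
    - split. exists (fun x => x); split; reflexivity. intros; tauto.
    - destruct Hf0 as [x Hx]. exact (Usym x f0 Hx).
    - destruct IHf as [[fi [a1 a2]] b1]. destruct IHg as [[gi [c1 c2]] d1].
      split. exists (fun z => fi (gi z)). unfold rmul. split; intro z.
      rewrite c1, a1; reflexivity. rewrite a2, c2; reflexivity.
      intros x y. unfold rmul. rewrite (b1 x y). apply d1.
    - destruct IHf as [_ b]. split. exists f0; split; auto.
      intros x y. split; intro K.
      + apply b. rewrite !Hfg. exact K.
      + apply b in K. rewrite !Hfg in K. exact K. }
  assert (Ginv : forall g, little_proj U g -> exists gi, little_proj U gi /\
            (forall z, gi (g z) = z) /\ (forall z, g (gi z) = z)).
  { intros g Hg. destruct (Gsym g Hg) as [[gi [H1 H2]] _]. exists gi. split; [|split]; auto.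
    exact (gen_inv gi Hg H1 H2). }
  assert (pres : forall g a b, in_Sym eqv g -> eqv (g a) (g b) -> eqv a b).
  { intros g a b [_ K] H. exact (proj2 (K a b) H). }
  assert (pres' : forall g a b, in_Sym eqv g -> eqv a b -> eqv (g a) (g b)).
  { intros g a b [_ K] H. exact (proj1 (K a b) H). }
  assert (unit_fix : forall g z, in_Sym eqv g -> g zero = zero -> g inf = inf ->
            is_unit eqv zero inf z -> is_unit eqv zero inf (g z)).
  { intros g z Hg H0 Hi [K1 K2]. split; intro K.
    - apply K1. apply (pres g); auto. rewrite H0. exact K.
    - apply K2. apply (pres g); auto. rewrite Hi. exact K. }
  assert (unit_swap : forall g z, in_Sym eqv g -> g zero = inf -> g inf = zero ->
            is_unit eqv zero inf z -> is_unit eqv zero inf (g z)).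
  { intros g z Hg H0 Hi [K1 K2]. split; intro K.
    - apply K2. apply (pres g); auto. rewrite Hi. exact K.
    - apply K1. apply (pres g); auto. rewrite H0. exact K. }
  assert (unit_eqv : forall p q, is_unit eqv zero inf p -> eqv q p -> is_unit eqv zero inf q).
  { intros p q [K1 K2] H. split; intro K.
    - apply K1. eapply Htrans; [apply Hsym; exact H | exact K].
    - apply K2. eapply Htrans; [apply Hsym; exact H | exact K]. }
  assert (F1 : forall x u v y, U x u -> U x v -> ~ eqv y x -> u y = v y -> u = v).
  { intros x u v y Hu Hv Hy E.
    assert (Hux : ~ eqv (u y) x).
    { intro K. apply Hy. apply (pres u); [exact (Usym x u Hu)|]. rewrite (HLM1a x u Hu). exact K. }
    destruct (HLM1b x y (u y) Hy Hux) as [w [Hw [Hwy Huniq]]].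
    rewrite (Huniq u Hu eq_refl). symmetry. apply Huniq; auto. }
  assert (F2 : forall x u y, U x u -> ~ eqv y x -> eqv (u y) y -> forall w, eqv (u w) w).
  { intros x u y Hu Hy K w. exact (HLM1'c x y u (fun z => z) Hy Hu (Uid x) K w). }
  assert (CJf : forall g x u, little_proj U g -> U x u ->
            exists v, U (g x) v /\ forall z, v (g z) = g (u z)).
  { intros g x u Hg Hu. destruct (Ginv g Hg) as [gi [_ [Hgi1 Hgi2]]].
    exists (fun z => g (u (gi z))). split.
    - apply (HLM2 x g Hg). exists u. split; auto.
      apply functional_extensionality; intro z. unfold comp. rewrite Hgi1. reflexivity.
    - intro z. rewrite Hgi1. reflexivity. }
  assert (CJb : forall g x v, little_proj U g -> U (g x) v ->
            exists u, U x u /\ forall z, v (g z) = g (u z)).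
  { intros g x v Hg Hv. apply (HLM2 x g Hg) in Hv. destruct Hv as [u [Hu E]].
    exists u. split; auto. intro z. exact (f_equal (fun F => F z) E). }
  destruct Htau as [[u1t [at_ [u2t [Hu1t [[Hat Hat0] [Hu2t Etau]]]]]] [tau0 tauinf]].
  assert (tauG : little_proj U tau).
  { rewrite Etau. apply gen_mul; [apply gen_mul|]; eapply UG; eauto. }
  clear u1t at_ u2t Hu1t Hat Hat0 Hu2t Etau.
  destruct (Ginv tau tauG) as [ti [tiG [ti1 ti2]]].
  assert (ti0 : ti zero = inf) by (rewrite <- tauinf; apply ti1).
  assert (tiinf : ti inf = zero) by (rewrite <- tau0 at 1; apply ti1).
  assert (tauS : in_Sym eqv tau) by (apply Gsym; exact tauG).
  assert (tiS : in_Sym eqv ti) by (apply Gsym; exact tiG).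
  assert (muG : forall x m, is_mu U zero inf x m -> little_proj U m).
  { intros x m [[u1 [a [u2 [Hu1 [[Ha _] [Hu2 E]]]]]] _]. rewrite E.
    apply gen_mul; [apply gen_mul|]; eapply UG; eauto. }
  assert (hG : forall h, hua eqv U zero inf h -> little_proj U h).
  { intros h Hh. unfold hua in Hh.
    induction Hh as [ | f0 Hf0 | f0 g0 Hf0 IHf Hg0 IHg | f0 g0 Hf0 IHf Hgf Hfg ].
    - apply gen_id.
    - destruct Hf0 as [x [y [mx [my [_ [_ [Hmx [Hmy E]]]]]]]]. rewrite E.
      apply gen_mul; eapply muG; eauto.
    - apply gen_mul; auto.
    - eapply gen_inv; eauto. }
  assert (hfix : forall h, hua eqv U zero inf h -> h zero = zero /\ h inf = inf).
  { intros h Hh. unfold hua in Hh.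
    induction Hh as [ | f0 Hf0 | f0 g0 Hf0 IHf Hg0 IHg | f0 g0 Hf0 IHf Hgf Hfg ].
    - split; reflexivity.
    - destruct Hf0 as [x [y [mx [my [_ [_ [[_ [Hmx0 Hmxi]] [[_ [Hmy0 Hmyi]] E]]]]]]]]. rewrite E.
      unfold rmul. rewrite Hmx0, Hmxi, Hmy0, Hmyi. split; reflexivity.
    - destruct IHf as [A1 A2]; destruct IHg as [B1 B2]. unfold rmul. rewrite A1, A2, B1, B2. split; reflexivity.
    - destruct IHf as [A1 A2]. split.
      + rewrite <- A1 at 1. apply Hgf.
      + rewrite <- A2 at 1. apply Hgf. }
  assert (hS : forall h, hua eqv U zero inf h -> in_Sym eqv h) by (intros; apply Gsym, hG; auto).
  assert (hmu : forall x y mx my, is_unit eqv zero inf x -> is_unit eqv zero inf y ->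
            is_mu U zero inf x mx -> is_mu U zero inf y my -> hua eqv U zero inf (fun z => my (mx z))).
  { intros x y mx my Hx Hy Hmx Hmy. apply gen_base. exists x, y, mx, my.
    split; [exact Hx|split;[exact Hy| split; [exact Hmx| split; [exact Hmy| reflexivity]]]]. }
  assert (hmul : forall f g, hua eqv U zero inf f -> hua eqv U zero inf g ->
            hua eqv U zero inf (fun z => g (f z))).
  { intros f g Hf Hg. exact (gen_mul Hf Hg). }
  assert (hid : hua eqv U zero inf (fun z => z)) by apply gen_id.
  assert (htt : hua eqv U zero inf (fun z => tau (tau z))) by (apply (hmu e e tau tau); auto).
  assert (hh2 : hua eqv U zero inf (fun z => ti (ti z))).
  { apply (@gen_inv X _ (fun z => tau (tau z))); [exact htt | intro z; rewrite !ti1; reflexivity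
      | intro z; rewrite !ti2; reflexivity]. }
  pose (S1 := fun g : X -> X => exists u h v, U zero u /\ hua eqv U zero inf h /\ U inf v /\
                forall z, g z = v (h (u z))).
  pose (S2 := fun g : X -> X => exists u h w, U zero u /\ hua eqv U zero inf h /\
                U_circ eqv U zero w /\ forall z, g z = w (tau (h (u z)))).
  pose (S := fun g : X -> X => S1 g \/ S2 g).
  assert (S_ext : forall f g, (forall z, f z = g z) -> S f -> S g).
  { intros f g E [[u [h [v [Hu [Hh [Hv Ef]]]]]] | [u [h [w [Hu [Hh [Hw Ef]]]]]]].
    - left. exists u, h, v. split; [auto|split;[auto|split;[auto|]]]. intro z. rewrite <- E. apply Ef.
    - right. exists u, h, w. split; [auto|split;[auto|split;[auto|]]]. intro z. rewrite <- E. apply Ef. }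
  assert (AB : forall u h k, U zero u -> hua eqv U zero inf h -> S k -> S (fun z => k (h (u z)))).
  { intros u h k Hu Hh [[u' [h' [v [Hu' [Hh' [Hv Ek]]]]]] | [u' [h' [w [Hu' [Hh' [Hw Ek]]]]]]].
    - assert (Hu'' : U (h zero) u') by (rewrite (proj1 (hfix h Hh)); exact Hu').
      destruct (CJb h zero u' (hG h Hh) Hu'') as [u'' [Hu3 E3]].
      left. exists (fun z => u'' (u z)), (fun y => h' (h y)), v.
      split; [apply Umul; auto|split; [apply hmul; auto|split; [auto|]]].
      intro z. rewrite Ek, E3. reflexivity.
    - assert (Hu'' : U (h zero) u') by (rewrite (proj1 (hfix h Hh)); exact Hu').
      destruct (CJb h zero u' (hG h Hh) Hu'') as [u'' [Hu3 E3]].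
      right. exists (fun z => u'' (u z)), (fun y => h' (h y)), w.
      split; [apply Umul; auto|split; [apply hmul; auto|split; [auto|]]].
      intro z. rewrite Ek, E3. reflexivity. }
  assert (inv_unit : forall u ui, U zero u -> (forall z, u (ui z) = z) ->
            is_unit eqv zero inf (u inf) -> is_unit eqv zero inf (ui inf)).
  { intros u ui Hu E [K1 K2]. assert (uS := Usym _ _ Hu). split; intro K.
    - apply Hbasis'. rewrite <- (E inf). rewrite <- (HLM1a zero u Hu). apply pres'; auto.
    - apply K2. apply Hsym. rewrite <- (E inf) at 1. apply pres'; auto. }
  assert (mu_exists : forall a, U inf a -> is_unit eqv zero inf (a zero) ->
     exists u1 u2 u1i u2i, U zero u1 /\ U zero u2 /\ U zero u1i /\ U zero u2i /\
       (forall z, u1i (u1 z) = z) /\ (forall z, u1 (u1i z) = z) /\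
       (forall z, u2i (u2 z) = z) /\ (forall z, u2 (u2i z) = z) /\
       is_mu U zero inf (a zero) (fun z => u2 (a (u1 z))) /\ is_unit eqv zero inf (u1 inf)).
  { intros a Ha [Ha1 Ha2]. destruct (Uinv _ _ Ha) as [ai [Hai [Eai1 Eai2]]].
    assert (aS := Usym _ _ Ha).
    assert (Hy : is_unit eqv zero inf (ai zero)).
    { split; intro K.
      - apply Ha1. apply Hsym. rewrite <- (Eai2 zero) at 1. apply pres'; auto.
      - apply Hbasis. rewrite <- (Eai2 zero). rewrite <- (HLM1a inf a Ha). apply pres'; auto. }
    destruct (HLM1b zero inf (ai zero) Hbasis' (proj1 Hy)) as [u1 [Hu1 [Eu1 _]]].
    destruct (HLM1b zero (a zero) inf Ha1 Hbasis') as [u2 [Hu2 [Eu2 _]]].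
    destruct (Uinv _ _ Hu1) as [u1i [Hu1i [E11 E12]]].
    destruct (Uinv _ _ Hu2) as [u2i [Hu2i [E21 E22]]].
    exists u1, u2, u1i, u2i. do 8 (split; [auto|]). split.
    - split. exists u1, a, u2. split; [auto|split;[split;[auto|reflexivity]|split;[auto|reflexivity]]].
      split.
      + rewrite (HLM1a zero u1 Hu1). exact Eu2.
      + rewrite Eu1, Eai2. apply HLM1a. exact Hu2.
    - rewrite Eu1. exact Hy. }
  assert (L_alphatau : forall a, U inf a -> is_unit eqv zero inf (a zero) -> S1 (fun z => tau (a z))).
  { intros a Ha Hu. destruct (mu_exists a Ha Hu) as [u1 [u2 [u1i [u2i [Hu1 [Hu2 [Hu1i [Hu2i
       [E11 [E12 [E21 [E22 [Hm Hu1u]]]]]]]]]]]]].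
    destruct (CJf tau zero u2i tauG Hu2i) as [b [Hb Eb]]. rewrite tau0 in Hb.
    exists u1i, (fun y => tau (u2 (a (u1 y)))), b. split; [auto|split; [|split;[auto|]]].
    - exact (hmu (a zero) e (fun z => u2 (a (u1 z))) tau Hu He Hm Htau0).
    - intro z. rewrite E12, Eb, E21. reflexivity. }
  assert (L_tauU : forall u, U zero u -> S (fun z => u (tau z))).
  { intros u Hu. assert (uS := Usym _ _ Hu). destruct (classic (eqv (u inf) inf)) as [K|K].
    - right. exists (fun z => z), (fun z => z), u.
      split; [apply Uid|split;[exact hid|split;[split;[exact Hu|exact (F2 zero u inf Hu Hbasis' K)]|]]].
      intro z. reflexivity.
    - destruct (CJf ti zero u tiG Hu) as [a [Ha Ea]]. rewrite ti0 in Ha.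
      assert (Ea0 : a zero = ti (u inf)) by (rewrite <- Ea, tiinf; reflexivity).
      assert (Hun : is_unit eqv zero inf (u inf)).
      { split; auto. intro K'. apply Hbasis'. apply (pres u); auto. rewrite (HLM1a zero u Hu). exact K'. }
      apply S_ext with (fun z => tau (a z)).
      + intro z. transitivity (tau (a (ti (tau z)))); [rewrite ti1; reflexivity|rewrite Ea, ti2; reflexivity].
      + left. apply L_alphatau; auto. rewrite Ea0. apply unit_swap; auto. }
  assert (L_alphaU : forall a u, U inf a -> is_unit eqv zero inf (a zero) -> U zero u ->
            S (fun z => u (a z))).
  { intros a u Ha Hau Hu. destruct (mu_exists a Ha Hau) as [u1 [u2 [u1i [u2i [Hu1 [Hu2 [Hu1i [Hu2i
       [E11 [E12 [E21 [E22 [Hm Hu1u]]]]]]]]]]]]].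
    assert (Hu3 : U zero (fun y => u (u2i y))) by (apply Umul; auto).
    assert (Hhh : hua eqv U zero inf (fun y => ti (ti (tau (u2 (a (u1 y))))))).
    { apply (hmul (fun y => tau (u2 (a (u1 y)))) (fun z => ti (ti z))); auto.
      exact (hmu (a zero) e (fun z => u2 (a (u1 z))) tau Hau He Hm Htau0). }
    apply S_ext with (fun z => (fun y => u (u2i (tau y))) ((fun y => ti (ti (tau (u2 (a (u1 y)))))) (u1i z))).
    - intro z. simpl. rewrite E12, ti1, ti2, E21. reflexivity.
    - exact (AB u1i _ _ Hu1i Hhh (L_tauU _ Hu3)). }
  assert (S1h : forall k h, S1 k -> hua eqv U zero inf h -> S1 (fun z => h (k z))).
  { intros k h [u [h' [v [Hu [Hh' [Hv Ek]]]]]] Hh.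
    destruct (CJf h inf v (hG h Hh) Hv) as [v' [Hv' Ev']]. rewrite (proj2 (hfix h Hh)) in Hv'.
    exists u, (fun y => h (h' y)), v'. split; [auto|split;[apply hmul; auto|split;[auto|]]].
    intro z. rewrite Ek, Ev'. reflexivity. }
  assert (S1v : forall k b, S1 k -> U inf b -> S1 (fun z => b (k z))).
  { intros k b [u [h' [v [Hu [Hh' [Hv Ek]]]]]] Hb.
    exists u, h', (fun y => b (v y)). split; [auto|split;[auto|split;[apply Umul; auto|]]].
    intro z. rewrite Ek. reflexivity. }
  assert (L_circ : forall v b, U inf v -> (forall z, eqv (v z) z) -> U zero b ->
            is_unit eqv zero inf (b inf) -> S (fun z => b (v z))).
  { intros v b Hv Hvc Hb Hbu.
    destruct (CJf tau zero b tauG Hb) as [al [Hal Eal]]. rewrite tau0 in Hal.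
    assert (Hal0 : is_unit eqv zero inf (al zero)).
    { assert (E0 : al zero = tau (b inf)) by (rewrite <- Eal, tauinf; reflexivity).
      rewrite E0. apply unit_swap; auto. }
    destruct (mu_exists al Hal Hal0) as [a1 [a2 [a1i [a2i [Ha1 [Ha2 [Ha1i [Ha2i
       [E11 [E12 [E21 [E22 [Hm Ha1u]]]]]]]]]]]]].
    assert (Ha1i' : U (tau inf) a1i) by (rewrite tauinf; exact Ha1i).
    destruct (CJb tau inf a1i tauG Ha1i') as [b1 [Hb1 Eb1]].
    destruct (CJf ti zero a2i tiG Ha2i) as [b2 [Hb2 Eb2]]. rewrite ti0 in Hb2.
    assert (Key : forall y, b y = b2 (ti (a2 (al (a1 (tau (b1 y))))))).
    { intro y. rewrite <- Eb1, E12, Eb2, E21, Eal, ti1. reflexivity. }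
    assert (HhA : hua eqv U zero inf (fun y => a2 (al (a1 (tau y))))).
    { exact (hmu e (al zero) tau (fun z => a2 (al (a1 z))) He Hal0 Htau0 Hm). }
    assert (Hc : U inf (fun z => b1 (v z))) by (apply Umul; auto).
    destruct (CJf _ inf _ (hG _ HhA) Hc) as [c [Hc' Ec]].
    rewrite (proj2 (hfix _ HhA)) in Hc'.
    assert (Hc0 : is_unit eqv zero inf (c zero)).
    { assert (Ec0 : c zero = a2 (al (a1 (tau (b1 (v zero)))))).
      { rewrite <- (Ec zero). f_equal. symmetry. exact (proj1 (hfix _ HhA)). }
      rewrite Ec0. apply unit_fix with (g := fun y => a2 (al (a1 (tau y)))).
      - apply hS; auto.
      - exact (proj1 (hfix _ HhA)).
      - exact (proj2 (hfix _ HhA)).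
      - apply unit_eqv with (b1 zero).
        + assert (Eb10 : b1 zero = ti (a1i inf)).
          { rewrite <- (ti1 (b1 zero)), <- Eb1, tau0. reflexivity. }
          rewrite Eb10. apply unit_swap; auto. apply inv_unit with a1; auto.
        + apply pres'; [apply (Usym _ _ Hb1)| apply Hvc]. }
    pose proof (L_alphatau c Hc' Hc0) as K1.
    pose proof (S1h _ _ K1 hh2) as K2.
    pose proof (S1v _ _ K2 Hb2) as K3.
    pose proof (AB (fun z => z) _ _ (Uid zero) HhA (or_introl K3)) as K4.
    apply S_ext with (2 := K4). intro z. simpl.
    rewrite Ec. simpl. rewrite ti1, Key. reflexivity. }
  assert (Rb : forall b, U zero b -> is_unit eqv zero inf (b inf) -> forall s, S s -> S (fun z => b (s z))).
  { intros b Hb Hbu s [[u [h [v [Hu [Hh [Hv E]]]]]] | [u [h [w [Hu [Hh [[Hw Hwc] E]]]]]]].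
    - destruct (classic (eqv (v zero) zero)) as [K|K].
      + pose proof (AB u h _ Hu Hh (L_circ v b Hv (F2 inf v zero Hv Hbasis K) Hb Hbu)) as K1.
        apply S_ext with (2 := K1). intro z. rewrite E. reflexivity.
      + assert (Hvu : is_unit eqv zero inf (v zero)).
        { split; auto. intro K'. apply Hbasis. apply (pres v); [exact (Usym _ _ Hv)|].
          rewrite (HLM1a inf v Hv). exact K'. }
        pose proof (AB u h _ Hu Hh (L_alphaU v b Hv Hvu Hb)) as K1.
        apply S_ext with (2 := K1). intro z. rewrite E. reflexivity.
    - assert (Hbw : U zero (fun y => b (w y))) by (apply Umul; auto).
      pose proof (AB u h _ Hu Hh (L_tauU _ Hbw)) as K1.
      apply S_ext with (2 := K1). intro z. rewrite E. reflexivity. }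
  assert (RU0 : forall f, U zero f -> forall s, S s -> S (fun z => f (s z))).
  { intros f Hf s Hs. destruct (classic (eqv (f inf) inf)) as [K|K].
    - destruct (HLM1b zero inf e Hbasis' (proj1 He)) as [b1 [Hb1 [Eb1 _]]].
      destruct (Uinv _ _ Hb1) as [b1i [Hb1i [Eb11 Eb12]]].
      assert (Hb2 : U zero (fun y => f (b1i y))) by (apply Umul; auto).
      assert (Hb2u : is_unit eqv zero inf (f (b1i inf))).
      { apply unit_eqv with (b1i inf).
        - apply inv_unit with b1; auto. rewrite Eb1. exact He.
        - exact (F2 zero f inf Hf Hbasis' K _). }
      pose proof (Rb _ Hb2 Hb2u _ (Rb b1 Hb1 ltac:(rewrite Eb1; exact He) s Hs)) as K1.
      apply S_ext with (2 := K1). intro z. simpl. rewrite Eb11. reflexivity.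
    - apply Rb; auto. split; auto. intro K'. apply Hbasis'. apply (pres f); [exact (Usym _ _ Hf)|].
      rewrite (HLM1a zero f Hf). exact K'. }
  assert (Rtau : forall s, S s -> S (fun z => tau (s z))).
  { intros s [[u [h [v [Hu [Hh [Hv E]]]]]] | [u [h [w [Hu [Hh [[Hw Hwc] E]]]]]]].
    - destruct (classic (eqv (v zero) zero)) as [K|K].
      + destruct (CJf tau inf v tauG Hv) as [w [Hw Ew]]. rewrite tauinf in Hw.
        right. exists u, h, w. split; [auto|split;[auto|split;[split;[auto|]|]]].
        * apply (F2 zero w inf Hw Hbasis'). rewrite <- tau0 at 1. rewrite Ew, <- tau0.
          apply pres'; auto.
        * intro z. rewrite E, Ew. reflexivity.
      + assert (Hvu : is_unit eqv zero inf (v zero)).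
        { split; auto. intro K'. apply Hbasis. apply (pres v); [exact (Usym _ _ Hv)|].
          rewrite (HLM1a inf v Hv). exact K'. }
        pose proof (AB u h _ Hu Hh (or_introl (L_alphatau v Hv Hvu))) as K1.
        apply S_ext with (2 := K1). intro z. rewrite E. reflexivity.
    - destruct (CJf tau zero w tauG Hw) as [b [Hb Eb]]. rewrite tau0 in Hb.
      left. exists u, (fun y => tau (tau (h y))), b. split; [auto|split;[|split;[auto|]]].
      + exact (hmul h _ Hh htt).
      + intro z. rewrite E, Eb. reflexivity. }
  assert (comm2 : forall x, tau (ti (ti x)) = ti (ti (tau x))) by (intro x; rewrite ti1, ti2; reflexivity).
  assert (Rh2 : forall s, S s -> S (fun z => ti (ti (s z)))).
  { intros s [K | [u [h [w [Hu [Hh [[Hw Hwc] E]]]]]]].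
    - left. exact (S1h _ _ K hh2).
    - destruct (CJf _ zero w (hG _ hh2) Hw) as [w' [Hw' Ew]]. rewrite (proj1 (hfix _ hh2)) in Hw'.
      right. exists u, (fun y => ti (ti (h y))), w'. split; [auto|split;[|split;[split;[auto|]|]]].
      + exact (hmul h _ Hh hh2).
      + intro y. assert (Ey : ti (ti (tau (tau y))) = y) by (rewrite !ti1; reflexivity).
        rewrite <- Ey. rewrite Ew. apply (pres' (fun z => ti (ti z))); [apply hS; exact hh2| apply Hwc].
      + intro z. rewrite E, comm2, Ew. reflexivity. }
  assert (Rti : forall s, S s -> S (fun z => ti (s z))).
  { intros s Hs. apply S_ext with (2 := Rh2 _ (Rtau s Hs)). intro z. rewrite ti1. reflexivity. }
  assert (RUinf : forall f, U inf f -> forall s, S s -> S (fun z => f (s z))).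
  { intros f Hf s Hs. assert (Hf' : U (tau zero) f) by (rewrite tau0; exact Hf).
    destruct (CJb tau zero f tauG Hf') as [u [Hu Eu]].
    apply S_ext with (2 := Rtau _ (RU0 u Hu _ (Rti s Hs))). intro z. rewrite <- Eu, ti2. reflexivity. }
  assert (RUx : forall x f, U x f -> forall s, S s -> S (fun z => f (s z))).
  { intros x f Hf s Hs. destruct (classic (eqv x inf)) as [K|K].
    - assert (Kx : ~ eqv x zero) by (intro K'; apply Hbasis; eapply Htrans; [apply Hsym; exact K'|exact K]).
      destruct (HLM1b zero inf x Hbasis' Kx) as [u0 [Hu0 [Eu0 _]]].
      destruct (Uinv _ _ Hu0) as [u0i [Hu0i [E01 E02]]].
      assert (Hf' : U (u0 inf) f) by (rewrite Eu0; exact Hf).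
      destruct (CJb u0 inf f (UG _ _ Hu0) Hf') as [v [Hv Ev]].
      apply S_ext with (2 := RU0 _ Hu0 _ (RUinf _ Hv _ (RU0 _ Hu0i _ Hs))). intro z.
      rewrite <- Ev, E02. reflexivity.
    - destruct (HLM1b inf zero x Hbasis K) as [al [Hal [Eal _]]].
      destruct (Uinv _ _ Hal) as [ali [Hali [E01 E02]]].
      assert (Hf' : U (al zero) f) by (rewrite Eal; exact Hf).
      destruct (CJb al zero f (UG _ _ Hal) Hf') as [u [Hu Eu]].
      apply S_ext with (2 := RUinf _ Hal _ (RU0 _ Hu _ (RUinf _ Hali _ Hs))). intro z.
      rewrite <- Eu, E02. reflexivity. }
  assert (GR : forall g, little_proj U g -> (forall s, S s -> S (fun z => g (s z))) /\
     (forall gi, (forall x, gi (g x) = x) -> (forall x, g (gi x) = x) ->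
        forall s, S s -> S (fun z => gi (s z)))).
  { intros g Hg. unfold little_proj in Hg.
    induction Hg as [ | f0 Hf0 | f0 g0 Hf0 IHf Hg0 IHg | f0 g0 Hf0 IHf Hgf Hfg ].
    - split.
      + intros s Hs. exact Hs.
      + intros gi _ K s Hs. apply S_ext with (2 := Hs). intro z. symmetry. apply K.
    - destruct Hf0 as [x Hx]. split.
      + exact (RUx x f0 Hx).
      + intros gi K1 K2. exact (RUx x gi (Uinvc x f0 gi Hx K1 K2)).
    - split.
      + intros s Hs. exact (proj1 IHg _ (proj1 IHf s Hs)).
      + intros k K1 K2 s Hs.
        destruct (Ginv f0 Hf0) as [fi [_ [F1' F2']]].
        destruct (Ginv g0 Hg0) as [gi [_ [G1 G2]]].
        assert (Ek : forall x, k x = fi (gi x)).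
        { intro x. transitivity (fi (gi (rmul f0 g0 (k x)))).
          - unfold rmul. rewrite G1, F1'. reflexivity.
          - rewrite K2. reflexivity. }
        apply S_ext with (2 := proj2 IHf fi F1' F2' _ (proj2 IHg gi G1 G2 s Hs)).
        intro z. rewrite Ek. reflexivity.
    - split.
      + exact (proj2 IHf g0 Hgf Hfg).
      + intros k K1 K2 s Hs. apply S_ext with (2 := proj1 IHf s Hs).
        intro z. rewrite <- (Hgf (s z)) at 2. rewrite K1. reflexivity. }
  assert (S_id : S (fun z => z)).
  { left. exists (fun z => z), (fun z => z), (fun z => z).
    split; [apply Uid|split;[exact hid|split;[apply Uid|]]]. intro z. reflexivity. }
  assert (GS : forall g, little_proj U g -> S g) by (intros g Hg; exact (proj1 (GR g Hg) _ S_id)).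
  assert (Part2 : forall g, (little_proj U g /\ g zero = zero) <->
     exists u h, U zero u /\ hua eqv U zero inf h /\ g = rmul u h).
  { intro g. split.
    - intros [Hg Hg0]. destruct (GS g Hg) as [[u [h [v [Hu [Hh [Hv E]]]]]] | [u [h [w [Hu [Hh [[Hw Hwc] E]]]]]]].
      + assert (Ev0 : v zero = zero).
        { transitivity (g zero); [|exact Hg0]. rewrite E, (HLM1a zero u Hu), (proj1 (hfix h Hh)). reflexivity. }
        assert (Ev : v = fun z => z) by (apply (F1 inf v (fun z => z) zero Hv (Uid inf) Hbasis); exact Ev0).
        exists u, h. split; [auto|split;[auto|]].
        apply functional_extensionality. intro z. rewrite E, Ev. reflexivity.
      + exfalso. apply Hbasis. pose proof (Hwc inf) as K.
        rewrite <- tau0 in K at 1. rewrite <- (proj1 (hfix h Hh)) in K at 1.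
        rewrite <- (HLM1a zero u Hu) in K at 1. rewrite <- E, Hg0 in K. exact K.
    - intros [u [h [Hu [Hh E]]]]. subst g. split.
      + apply gen_mul; [eapply UG; eauto | apply hG; auto].
      + unfold rmul. rewrite (HLM1a zero u Hu). exact (proj1 (hfix h Hh)). }
  split; [|split].
  - intro g. split.
    + intro Hg. destruct (GS g Hg) as [[u [h [v [Hu [Hh [Hv E]]]]]] | [u [h [w [Hu [Hh [Hw E]]]]]]].
      * left. exists u, h, v. split; [auto|split;[auto|split;[auto|]]].
        apply functional_extensionality. intro z. rewrite E. reflexivity.
      * right. exists u, h, w. split; [auto|split;[auto|split;[auto|]]].
        apply functional_extensionality. intro z. rewrite E. reflexivity.
    + intros [[u [h [v [Hu [Hh [Hv E]]]]]] | [u [h [w [Hu [Hh [[Hw _] E]]]]]]]; subst g.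
      * apply gen_mul; [apply gen_mul|]; [eapply UG; eauto | apply hG; auto | eapply UG; eauto].
      * apply gen_mul; [apply gen_mul; [apply gen_mul|]|];
          [eapply UG; eauto | apply hG; auto | exact tauG | eapply UG; eauto].
  - exact Part2.
  - intro g. split.
    + intros [Hg [Hg0 Hgi]]. destruct (proj1 (Part2 g) (conj Hg Hg0)) as [u [h [Hu [Hh E]]]].
      destruct (Ginv h (hG h Hh)) as [hi [_ [H1 H2]]].
      assert (Eu : u inf = inf).
      { assert (K : h (u inf) = inf) by (transitivity (g inf); [rewrite E; reflexivity | exact Hgi]).
        transitivity (hi (h (u inf))); [symmetry; apply H1|]. rewrite K.
        transitivity (hi (h inf)); [rewrite (proj2 (hfix h Hh)); reflexivity | apply H1]. }
      assert (Eu' : u = fun z => z) by (apply (F1 zero u (fun z => z) inf Hu (Uid zero) Hbasis'); exact Eu).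
      subst g u. exact Hh.
    + intro Hh. split; [apply hG; auto| exact (hfix g Hh)].
Qed.
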